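(* Let $S$ be any language over alphabet $\Sigma$ and let $\Delta=\{(x,n)\in\Sigma^*\times\mathbb{N}\mid |x|\leq n\}$. If $S$ belongs to $\mathrm{1QFA}/n$, then there exist two constants $c,d\in\mathbb{N}^{+}$, an equivalence relation $\equiv_S$ over $\Delta$, a partial order $\leq_S$ over $\Delta$, and a closeness relation $\cong$ over $\Delta$ satisfying the following seven conditions, where $(x,n),(y,n)\in\Delta$, $z\in\Sigma^*$, $\sigma\in\Sigma$ and $|x|=|y|$: 1. The set $\Delta/\!\equiv_S$ of equivalence classes is finite. 2. If $(x,n)\cong(y,n)$, then $(x,n)\equiv_S(y,n)$. 3. If $|x\sigma|\leq n$, then $(x\sigma,n)\leq_S(x,n)$. 4. If $|xz|\leq n$, $(x,n)=_S(xz,n)$, $(y,n)=_S(yz,n)$, and $(xz,n)\cong(yz,n)$, then $(x,n)\equiv_S(y,n)$. 5. $(x,n)\equiv_S(y,n)$ iff $S(xz)=S(yz)$ for all strings $z\in\Sigma^*$ with $|xz|=n$. 6. Any strictly descending chain (w.r.t. $\leq_S$) in $\Delta$ has length at most $c$. 7. Any $\cong$-discrepancy subset of $\Delta$ has cardinality at most $d$.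
   Context: A 1qfa is a one-way measure-many quantum finite automaton (input between endmarkers, one unitary per scanned symbol followed at each step by a projection measurement onto accepting/rejecting/non-halting subspaces). For equal-length strings $x,y$, $\genfrac{[}{]}{0pt}{}{x}{y}$ is the two-track string with $x$ on the upper track and $y$ on the lower. $\mathrm{1QFA}/n$ is the family of languages $L$ for which there exist a 1qfa $M$, $\varepsilon\in[0,1/2)$, an advice alphabet $\Gamma$, and an advice function $h:\mathbb{N}\to\Gamma^*$ with $|h(n)|=n$ such that $M$ on $\genfrac{[}{]}{0pt}{}{x}{h(|x|)}$ outputs $L(x)$ with probability at least $1-\varepsilon$ for all $x$. $S(w)$ denotes the characteristic function of $S$. For a partial order $\leq$, $x=y$ means $x\leq y$ and $y\leq x$, and $x<y$ means $x\leq y$ and $x\neq y$; a strictly descending chain of length $m$ is a sequence $(s_1,\dots,s_m)$ with $s_{i+1}<s_i$ for all $i\in[m-1]$. A closeness relation is a reflexive, symmetric binary relation; for a closeness relation $\cong$, a $\cong$-discrepancy set is a set in which any two distinct elements $x,y$ satisfy $x\not\cong y$. *)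

(* Defs.v *)
From HB Require Import structures.
From mathcomp Require Import all_boot all_order all_algebra.
From mathcomp Require Import reals.
From mathcomp Require Import complex.

Set Implicit Arguments.
Unset Strict Implicit.
Unset Printing Implicit Defensive.

Import Order.TTheory GRing.Theory Num.Theory.
Local Open Scope ring_scope.

(* One-way measure-many quantum finite automata (Kondacs-Watrous).     *)

Section QFA.
Variable R : realType.
Local Notation C := (R[i]).

Definition adjmx (Q : nat) (A : 'M[C]_Q) : 'M[C]_Q := (map_mx (@conjc R) A)^T.

Definition unitarymx (Q : nat) (A : 'M[C]_Q) : Prop := A *m adjmx A = 1%:M.

Record qfa (A : finType) := Qfa {
  qfa_nst : nat;
  qfa_U : A -> 'M[C]_qfa_nst;
  qfa_Ucent : 'M[C]_qfa_nst;
  qfa_Udollar : 'M[C]_qfa_nst;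
  qfa_q0 : 'I_qfa_nst;
  qfa_acc : {set 'I_qfa_nst};
  qfa_rej : {set 'I_qfa_nst};
  qfa_U_unitary : forall a, unitarymx (qfa_U a);
  qfa_Ucent_unitary : unitarymx qfa_Ucent;
  qfa_Udollar_unitary : unitarymx qfa_Udollar;
  qfa_acc_rej_disj : [disjoint qfa_acc & qfa_rej]
}.

Definition projv (Q : nat) (S : {set 'I_Q}) (v : 'cV[C]_Q) : 'cV[C]_Q :=
  \col_i (if i \in S then v i 0 else 0).

Definition sqnorm (Q : nat) (v : 'cV[C]_Q) : R :=
  \sum_i ((@complex.Re R (v i 0)) ^+ 2 + (@complex.Im R (v i 0)) ^+ 2).

Variable A : finType.
Variable M : qfa A.
Local Notation Q := (qfa_nst M).

(* configuration: (non-halting unnormalized state, acc. prob., rej. prob.) *)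
Definition qfa_step (U : 'M[C]_Q) (c : 'cV[C]_Q * R * R) : 'cV[C]_Q * R * R :=
  let: (psi, pa, pr) := c in
  let phi := U *m psi in
  (projv (~: (qfa_acc M :|: qfa_rej M)) phi,
   pa + sqnorm (projv (qfa_acc M) phi),
   pr + sqnorm (projv (qfa_rej M) phi)).

Definition qfa_run (w : seq A) : 'cV[C]_Q * R * R :=
  qfa_step (qfa_Udollar M)
    (foldl (fun c a => qfa_step (qfa_U M a) c)
       (qfa_step (qfa_Ucent M) (delta_mx (qfa_q0 M) 0, 0, 0)) w).

Definition qfa_accprob (w : seq A) : R := (qfa_run w).1.2.
Definition qfa_rejprob (w : seq A) : R := (qfa_run w).2.

End QFA.

Definition track2 (S G : Type) (x : seq S) (y : seq G) : seq (S * G) := zip x y.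

Definition in_1QFA_n (R : realType) (Sigma : finType) (L : seq Sigma -> bool) : Prop :=
  exists (Gamma : finType) (h : nat -> seq Gamma) (M : qfa R (Sigma * Gamma)%type)
         (eps : R),
    [/\ 0 <= eps, eps < 1 / 2, (forall n, size (h n) = n) &
      forall x : seq Sigma,
        if L x then 1 - eps <= qfa_accprob M (track2 x (h (size x)))
        else 1 - eps <= qfa_rejprob M (track2 x (h (size x)))].

Definition Delta (Sigma : Type) := {p : seq Sigma * nat | (size p.1 <= p.2)%N}.

Section Rels.
Variable T : Type.

Definition is_equivalence (r : T -> T -> Prop) : Prop :=
  [/\ forall a, r a a, forall a b, r a b -> r b a &
      forall a b c, r a b -> r b c -> r a c].

(* "partial order" in the paper's sense: = is defined as mutual <=, so
   only reflexivity and transitivity are used. *)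
Definition is_preorder (r : T -> T -> Prop) : Prop :=
  (forall a, r a a) /\ (forall a b c, r a b -> r b c -> r a c).

Definition is_closeness (r : T -> T -> Prop) : Prop :=
  (forall a, r a a) /\ (forall a b, r a b -> r b a).

Definition finite_quotient (r : T -> T -> Prop) : Prop :=
  exists (k : nat) (f : nat -> T), forall a, exists2 i, (i < k)%N & r a (f i).

Definition ord_eq (le : T -> T -> Prop) a b := le a b /\ le b a.
Definition ord_lt (le : T -> T -> Prop) a b := le a b /\ ~ ord_eq le a b.

Fixpoint desc_chain (le : T -> T -> Prop) (s : seq T) : Prop :=
  match s with
  | a :: ((b :: _) as t) => ord_lt le b a /\ desc_chain le t
  | _ => True
  end.

End Rels.

Definition discrepancy_list (T : eqType) (r : T -> T -> Prop) (s : seq T) : Prop :=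
  uniq s /\ (forall a b, a \in s -> b \in s -> a != b -> ~ r a b).

Definition dstr (Sigma : Type) (p : Delta Sigma) : seq Sigma := (proj1_sig p).1.
Definition dlen (Sigma : Type) (p : Delta Sigma) : nat := (proj1_sig p).2.

(* Main.v *)
Require Import Defs.
From HB Require Import structures.
From mathcomp Require Import all_boot all_order all_algebra.
From mathcomp Require Import reals complex boolp.
From mathcomp Require Import lra ring.
Import Order.TTheory GRing.Theory Num.Theory.
Set Implicit Arguments. Unset Strict Implicit.
Local Open Scope ring_scope.


Section Vec.
Variable R : realType.
Local Notation C := (R[i]).
Variable Q : nat.
Implicit Types u v w : 'cV[C]_Q.

Lemma sqnorm_ge0 v : 0 <= sqnorm v.
Proof. apply: sumr_ge0 => i _; apply: addr_ge0; exact: sqr_ge0. Qed.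

Lemma sqnorm_gen u v w (k1 k2 k3 : R) :
  (forall a b c : R, a = b + c -> k1 * a ^+ 2 <= k2 * b ^+ 2 + k3 * c ^+ 2) ->
  u = v + w -> k1 * sqnorm u <= k2 * sqnorm v + k3 * sqnorm w.
Proof.
move=> H ->; rewrite /sqnorm !mulr_sumr -big_split /=; apply: ler_sum => i _.
rewrite mxE; case: (v i 0) => a1 b1; case: (w i 0) => a2 b2 /=.
have H1 := H _ _ _ (erefl (a1 + a2)).
have H2 := H _ _ _ (erefl (b1 + b2)).
rewrite !mulrDr; lra.
Qed.

Lemma projvD (S : {set 'I_Q}) v w : Defs.projv S (v + w) = Defs.projv S v + Defs.projv S w.
Proof. by apply/matrixP => i j; rewrite !mxE; case: (i \in S) => //; rewrite addr0. Qed.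

Lemma projvN (S : {set 'I_Q}) v : Defs.projv S (- v) = - Defs.projv S v.
Proof. by apply/matrixP => i j; rewrite !mxE; case: (i \in S) => //; rewrite oppr0. Qed.

Lemma sqnorm_projv (S : {set 'I_Q}) v : sqnorm (Defs.projv S v) =
  \sum_i (if i \in S then (complex.Re (v i 0)) ^+ 2 + (complex.Im (v i 0)) ^+ 2 else 0).
Proof.
apply: eq_bigr => i _; rewrite mxE; case: (i \in S) => //=.
by rewrite expr0n /= addr0.
Qed.

Lemma sqnorm_split (A B : {set 'I_Q}) v : [disjoint A & B] ->
  sqnorm v = sqnorm (Defs.projv (~: (A :|: B)) v) + sqnorm (Defs.projv A v) + sqnorm (Defs.projv B v).
Proof.
move=> dAB; rewrite !sqnorm_projv -!big_split /=; apply: eq_bigr => i _.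
rewrite in_setC in_setU.
case iA: (i \in A); case iB: (i \in B) => /=; rewrite ?addr0 ?add0r //.
by move: dAB => /disjointFr /(_ iA); rewrite iB.
Qed.

Lemma sqnorm_C v : real_complex R (sqnorm v) = (((map_mx (@conjc R) v)^T) *m v) 0 0.
Proof.
rewrite /sqnorm mxE raddf_sum; apply: eq_bigr => j _.
rewrite !mxE; case: (v j 0) => a b /=.
apply/eqP; rewrite eq_complex /=; apply/andP; split; apply/eqP; ring.
Qed.

Lemma sqnorm_unitary (U : 'M[C]_Q) v : Defs.unitarymx U -> sqnorm (U *m v) = sqnorm v.
Proof.
move=> /mulmx1C HU; apply: (@complexI R); rewrite !sqnorm_C.
rewrite map_mxM trmx_mul -mulmxA (mulmxA _ U).
by move: HU; rewrite /Defs.adjmx => ->; rewrite mul1mx.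
Qed.

End Vec.

Section Steps.
Variable R : realType.
Local Notation C := (R[i]).
Variable A : finType.
Variable M : qfa R A.
Local Notation Q := (qfa_nst M).
Local Notation cfg := ('cV[C]_Q * R * R)%type.
Local Notation accS := (qfa_acc M).
Local Notation rejS := (qfa_rej M).
Local Notation nhS := (~: (qfa_acc M :|: qfa_rej M)).

Definition tot (c : cfg) := c.1.2 + c.2 + sqnorm c.1.1.

Lemma step_tot (U : 'M[C]_Q) c : Defs.unitarymx U -> tot (qfa_step U c) = tot c.
Proof.
move=> HU; case: c => [[psi pa] pr]; rewrite /tot /=.
rewrite -(sqnorm_unitary psi HU) (sqnorm_split (U *m psi) (qfa_acc_rej_disj M)).
ring.
Qed.

Lemma step_mono (U : 'M[C]_Q) c :
  c.1.2 <= (qfa_step U c).1.2 /\ c.2 <= (qfa_step U c).2.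
Proof.
case: c => [[psi pa] pr] /=; split; rewrite lerDl; exact: sqnorm_ge0.
Qed.

Lemma young (t : R) : 0 < t -> forall a b c : R, a = b + c ->
  1 * a ^+ 2 <= (1 + t) * b ^+ 2 + (1 + t^-1) * c ^+ 2.
Proof.
move=> t0 a b c ->.
have -> : (1 + t) * b ^+ 2 + (1 + t^-1) * c ^+ 2 = 1 * (b + c) ^+ 2 + (t * b - c) ^+ 2 / t.
  by field; rewrite gt_eqF.
by rewrite lerDl divr_ge0 // ?sqr_ge0 // ltW.
Qed.

Lemma crude : forall a b c : R, a = b + c -> 1 * a ^+ 2 <= 2 * b ^+ 2 + 2 * c ^+ 2.
Proof.
move=> a b c ->.
have -> : 2 * b ^+ 2 + 2 * c ^+ 2 = 1 * (b + c) ^+ 2 + (b - c) ^+ 2 by ring.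
by rewrite lerDl sqr_ge0.
Qed.

Lemma sqnorm_opp (v : 'cV[C]_Q) : sqnorm (- v) = sqnorm v.
Proof.
apply: eq_bigr => i _; rewrite mxE; case: (v i 0) => a b /=.
by rewrite !sqrrN.
Qed.

Lemma sqnorm_sym (u v : 'cV[C]_Q) : sqnorm (u - v) = sqnorm (v - u).
Proof. by rewrite -sqnorm_opp opprB. Qed.

Definition phi (t : R) (c1 c2 : cfg) :=
  c1.1.2 - (1 + t) * c2.1.2 + (1 + t^-1) * sqnorm (c1.1.1 - c2.1.1).

Lemma step_phi t (U : 'M[C]_Q) c1 c2 : 0 < t -> Defs.unitarymx U ->
  phi t (qfa_step U c1) (qfa_step U c2) <= phi t c1 c2.
Proof.
move=> t0 HU; case: c1 => [[p1 a1] r1]; case: c2 => [[p2 a2] r2]; rewrite /phi /=.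
set f1 := U *m p1; set f2 := U *m p2.
have eD : U *m (p1 - p2) = f1 - f2 by rewrite mulmxBr.
have HD := sqnorm_split (U *m (p1 - p2)) (qfa_acc_rej_disj M).
rewrite sqnorm_unitary // eD in HD; rewrite HD.
rewrite -projvN -projvD.
have Hy := sqnorm_gen (young t0) (projvD accS f2 (f1 - f2)).
rewrite addrC subrK in Hy.
have H1 := sqnorm_ge0 (Defs.projv rejS (f1 - f2)).
have H2 : 0 <= 1 + t^-1 by rewrite addr_ge0 // invr_ge0 ltW.
have H3 := mulr_ge0 H2 H1.
rewrite !mulrDr in Hy *.
rewrite mul1r in Hy.
lra.
Qed.

Definition psi_loss (c1 c2 : cfg) :=
  sqnorm (c1.1.1 - c2.1.1) - 2 * sqnorm c1.1.1 - 2 * sqnorm c2.1.1.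

Lemma step_loss (U : 'M[C]_Q) c1 c2 : Defs.unitarymx U ->
  psi_loss c1 c2 <= psi_loss (qfa_step U c1) (qfa_step U c2).
Proof.
move=> HU; case: c1 => [[p1 a1] r1]; case: c2 => [[p2 a2] r2]; rewrite /psi_loss /=.
set f1 := U *m p1; set f2 := U *m p2.
have eD : U *m (p1 - p2) = f1 - f2 by rewrite mulmxBr.
have HD := sqnorm_split (U *m (p1 - p2)) (qfa_acc_rej_disj M).
rewrite sqnorm_unitary // eD in HD; rewrite HD.
have E1 := sqnorm_split f1 (qfa_acc_rej_disj M).
have E2 := sqnorm_split f2 (qfa_acc_rej_disj M).
rewrite sqnorm_unitary // in E1; rewrite sqnorm_unitary // in E2.
rewrite E1 E2.
rewrite -projvN -projvD.
have Ha := sqnorm_gen crude (projvD accS f1 (- f2)).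
have Hr := sqnorm_gen crude (projvD rejS f1 (- f2)).
rewrite !projvN !sqnorm_opp in Ha Hr.
rewrite !mul1r in Ha Hr.
lra.
Qed.

Definition stepl (c : cfg) (w : seq A) :=
  foldl (fun c a => qfa_step (qfa_U M a) c) c w.

Lemma stepl_tot c w : tot (stepl c w) = tot c.
Proof.
elim: w c => [|a w IH] c //=; rewrite IH step_tot //; exact: qfa_U_unitary.
Qed.

Lemma stepl_mono c w : c.1.2 <= (stepl c w).1.2 /\ c.2 <= (stepl c w).2.
Proof.
elim: w c => [|a w IH] c /=; first by rewrite !lexx.
have [h1 h2] := step_mono (qfa_U M a) c; have [h3 h4] := IH (qfa_step (qfa_U M a) c).
split; [exact: le_trans h1 h3 | exact: le_trans h2 h4].
Qed.

Lemma stepl_phi t c1 c2 w : 0 < t -> phi t (stepl c1 w) (stepl c2 w) <= phi t c1 c2.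
Proof.
move=> t0; elim: w c1 c2 => [|a w IH] c1 c2 //=.
apply: le_trans (IH _ _) _; apply: step_phi => //; exact: qfa_U_unitary.
Qed.

Lemma stepl_loss c1 c2 w : psi_loss c1 c2 <= psi_loss (stepl c1 w) (stepl c2 w).
Proof.
elim: w c1 c2 => [|a w IH] c1 c2 //=.
apply: le_trans (IH _ _); apply: step_loss => //; exact: qfa_U_unitary.
Qed.

End Steps.

Section Main.
Variable R : realType.
Local Notation C := (R[i]).
Variables (Sigma Gamma : finType) (S : seq Sigma -> bool) (h : nat -> seq Gamma).
Variable M : qfa R (Sigma * Gamma)%type.
Variable eps : R.
Hypothesis eps0 : 0 <= eps.
Hypothesis epsh : eps < 1 / 2.
Hypothesis hsz : forall n, size (h n) = n.
Hypothesis hS : forall x : seq Sigma,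
        if S x then 1 - eps <= qfa_accprob M (track2 x (h (size x)))
        else 1 - eps <= qfa_rejprob M (track2 x (h (size x))).
Local Notation Q := (qfa_nst M).

Definition init := qfa_step (qfa_Ucent M) (delta_mx (qfa_q0 M) 0, 0, 0).
Definition cfgx (x : seq Sigma) n := stepl init (zip x (take (size x) (h n))).

Lemma init_tot : tot init = 1.
Proof.
rewrite /init step_tot; last exact: qfa_Ucent_unitary.
rewrite /tot /= !add0r /sqnorm (bigD1 (qfa_q0 M)) //= big1 ?addr0.
  by rewrite mxE !eqxx /= expr1n expr0n addr0.
by move=> i /negbTE ni; rewrite mxE ni /= expr0n addr0.
Qed.

Lemma init_mono : 0 <= init.1.2 /\ 0 <= init.2.
Proof. exact: (step_mono (qfa_Ucent M) (delta_mx (qfa_q0 M) 0, 0, 0)). Qed.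

Lemma cfgx_props x n : let c := cfgx x n in
  tot c = 1 /\ 0 <= c.1.2 /\ 0 <= c.2 /\ 0 <= sqnorm c.1.1 /\ sqnorm c.1.1 <= 1.
Proof.
rewrite /= /cfgx; set w := zip _ _.
have T := stepl_tot init w; rewrite init_tot in T.
have [m1 m2] := stepl_mono init w; have [i1 i2] := init_mono.
have s0 := sqnorm_ge0 (stepl init w).1.1.
move: T; rewrite /tot => T.
do !split => //; try lra.
Qed.

Lemma run_split x z n : size (x ++ z) = n ->
  qfa_run M (track2 (x ++ z) (h (size (x ++ z)))) =
  qfa_step (qfa_Udollar M) (stepl (cfgx x n) (zip z (drop (size x) (h n)))).
Proof.
move=> E; rewrite E /track2.
have sx : size x = size (take (size x) (h n)).
  by rewrite size_takel // hsz -E size_cat leq_addr.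
by rewrite -{1}(cat_take_drop (size x) (h n)) zip_cat // /qfa_run foldl_cat.
Qed.

Lemma cfgx_ext x z n : (size (x ++ z) <= n)%N ->
  cfgx (x ++ z) n = stepl (cfgx x n) (zip z (take (size z) (drop (size x) (h n)))).
Proof.
move=> E; rewrite /cfgx size_cat takeD zip_cat; first by rewrite /stepl foldl_cat.
by rewrite size_takel // hsz; apply: leq_trans E; rewrite size_cat leq_addr.
Qed.


Definition gg := 1 - 2 * eps.
Definition tq := gg / 4.
Definition kap := tq / (1 + tq^-1).

Lemma gg_gt0 : 0 < gg. Proof. rewrite /gg. have := epsh. lra. Qed.
Lemma tt_gt0 : 0 < tq. Proof. rewrite /tq; have := gg_gt0; lra. Qed.
Lemma tt1_gt0 : 0 < 1 + tq^-1.
Proof. by rewrite ltr_pwDr // invr_gt0 tt_gt0. Qed.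
Lemma kap_gt0 : 0 < kap. Proof. by rewrite /kap divr_gt0 // ?tt_gt0 ?tt1_gt0. Qed.
Lemma kapE : (1 + tq^-1) * kap = tq.
Proof. by rewrite /kap mulrC divfK // gt_eqF // tt1_gt0. Qed.

Lemma final_bound c w : tot c = 1 -> 0 <= c.1.2 -> 0 <= c.2 ->
  let f := qfa_step (qfa_Udollar M) (stepl c w) in f.1.2 + f.2 <= 1 /\ 0 <= f.1.2.
Proof.
move=> T a0 r0 /=.
have T' := step_tot (stepl c w) (qfa_Udollar_unitary M).
rewrite stepl_tot T /tot in T'.
have [m1 m2] := stepl_mono c w.
have [m3 m4] := step_mono (qfa_Udollar M) (stepl c w).
have s0 := sqnorm_ge0 (qfa_step (qfa_Udollar M) (stepl c w)).1.1.
split; lra.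
Qed.

Lemma sep1 x y n z : size x = size y -> size (x ++ z) = n ->
  (cfgx x n).1.2 - (cfgx y n).1.2 <= tq ->
  sqnorm ((cfgx x n).1.1 - (cfgx y n).1.1) <= kap -> S (x ++ z) -> S (y ++ z).
Proof.
move=> sxy E ha hd Sx.
have := hS (x ++ z); rewrite Sx /qfa_accprob (run_split E) => Ax.
apply/negPn/negP => Sy.
have Ey : size (y ++ z) = n by rewrite size_cat -sxy -size_cat.
have := hS (y ++ z); rewrite (negbTE Sy) /qfa_rejprob (run_split Ey) -sxy => Ry.
set w := zip z (drop (size x) (h n)) in Ax Ry.
set c1 := cfgx x n in Ax ha hd; set c2 := cfgx y n in Ry ha hd.
have P1 := stepl_phi c1 c2 w tt_gt0.
have P2 := @step_phi _ _ M tq (qfa_Udollar M) (stepl c1 w) (stepl c2 w) tt_gt0 (qfa_Udollar_unitary M).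
have [T2 [a2 [r2 _]]] := cfgx_props y n.
have [F1 F2] := final_bound w T2 a2 r2.
move: P1 P2 Ax Ry F1 F2; rewrite /phi.
set f1 := qfa_step _ (stepl c1 w); set f2 := qfa_step _ (stepl c2 w).
move=> P1 P2 Ax Ry F1 F2.
have h1 : (1 + tq) * f2.1.2 <= eps + tq.
  have : f2.1.2 <= eps by lra.
  move=> le; rewrite mulrDl mul1r; apply: lerD => //.
  have e1 : eps <= 1 by have := epsh; lra.
  have q1 : tq * f2.1.2 <= tq * eps by rewrite ler_wpM2l // ltW // tt_gt0.
  have q2 : tq * eps <= tq * 1 by rewrite ler_wpM2l // ltW // tt_gt0.
  by rewrite mulr1 in q2; lra.
have h2 : c2.1.2 <= (1 + tq) * c2.1.2.
  by rewrite mulrDl mul1r lerDl mulr_ge0 // ltW // tt_gt0.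
have h3 : (1 + tq^-1) * sqnorm (c1.1.1 - c2.1.1) <= tq.
  by rewrite -[X in _ <= X]kapE ler_wpM2l // ltW // tt1_gt0.
have h4 : 0 <= (1 + tq^-1) * sqnorm (f1.1.1 - f2.1.1).
  by rewrite mulr_ge0 ?sqnorm_ge0 // ltW // tt1_gt0.
have h5 : 4 * tq = 1 - 2 * eps by rewrite /tq /gg; field.
have h6 := tt_gt0.
clear sxy E Ey Sx Sy hS hsz.
lra.
Qed.

Lemma sep x y n : size x = size y ->
  `|(cfgx x n).1.2 - (cfgx y n).1.2| <= tq ->
  sqnorm ((cfgx x n).1.1 - (cfgx y n).1.1) <= kap ->
  forall z, size (x ++ z) = n -> S (x ++ z) = S (y ++ z).
Proof.
move=> sxy ha hd z E.
have Ey : size (y ++ z) = n by rewrite size_cat -sxy -size_cat.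
move: ha; rewrite ler_norml => /andP [ha1 ha2].
apply/idP/idP; first exact: (sep1 sxy E ha2 hd).
apply: (sep1 (esym sxy) Ey); first lra.
by rewrite sqnorm_sym.
Qed.

Definition Nb := 8 / gg + 8 / kap + 4 * (Q%:R : R) / kap.
Definition N := (Num.truncn Nb).+1.

Lemma Nb_lt : Nb < N%:R.
Proof. exact: truncnS_gt. Qed.

Lemma N_gt0 : (0 : R) < N%:R. Proof. by rewrite ltr0n. Qed.
Lemma N_ge1 : (1 : R) <= N%:R. Proof. by rewrite ler1n. Qed.

Lemma ge_N (a b : R) : 0 < a -> 0 <= b -> b / a <= Nb -> b * N%:R^-1 <= a.
Proof.
move=> a0 b0 H; rewrite ler_pdivrMr ?N_gt0 //.
have H2 : b / a <= N%:R by apply: ltW; apply: le_lt_trans H Nb_lt.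
by move: H2; rewrite ler_pdivrMr // mulrC.
Qed.

Lemma NA : 8 * N%:R^-1 <= gg.
Proof.
apply: ge_N; rewrite ?gg_gt0 //.
have := divr_ge0 (ler0n R 8) (ltW kap_gt0).
have := divr_ge0 (mulr_ge0 (ler0n R 4) (ler0n R Q)) (ltW kap_gt0).
rewrite /Nb; lra.
Qed.

Lemma NB : 8 * N%:R^-1 <= kap.
Proof.
apply: ge_N; rewrite ?kap_gt0 //.
have := divr_ge0 (ler0n R 8) (ltW gg_gt0).
have := divr_ge0 (mulr_ge0 (ler0n R 4) (ler0n R Q)) (ltW kap_gt0).
rewrite /Nb; lra.
Qed.

Lemma NC : 4 * (Q%:R : R) * N%:R^-1 <= kap.
Proof.
apply: ge_N; rewrite ?kap_gt0 ?mulr_ge0 //.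
have := divr_ge0 (ler0n R 8) (ltW gg_gt0).
have := divr_ge0 (ler0n R 8) (ltW kap_gt0).
rewrite /Nb; lra.
Qed.

Lemma ltN (d : R) : d * N%:R < 1 -> d < N%:R^-1.
Proof. by move=> H; rewrite -[X in _ < X]mul1r ltr_pdivlMr ?N_gt0. Qed.

Lemma leN (d e : R) : d * N%:R <= e -> d <= e * N%:R^-1.
Proof. by move=> H; rewrite ler_pdivlMr ?N_gt0. Qed.

Definition idx (u : R) := Num.truncn ((u + 1) * N%:R).

Lemma idx_close u v : -1 <= u -> -1 <= v -> idx u = idx v ->
  (u - v) * N%:R < 1 /\ (v - u) * N%:R < 1.
Proof.
move=> u1 v1 E.
have hu : 0 <= (u + 1) * N%:R by rewrite mulr_ge0 // ?ler0n //; lra.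
have hv : 0 <= (v + 1) * N%:R by rewrite mulr_ge0 // ?ler0n //; lra.
have /andP [a1 a2] := truncn_itv hu; have /andP [b1 b2] := truncn_itv hv.
rewrite -/(idx u) -/(idx v) E in a1 a2.
rewrite -/(idx v) in b1 b2.
move: a1 a2 b1 b2; rewrite -natr1 !mulrDl !mul1r.
split; lra.
Qed.

Lemma idx_le u : u <= 1 -> (idx u < (2 * N).+1)%N.
Proof.
move=> u1; rewrite ltnS /idx -[X in (_ <= X)%N](@natrK R) natrM.
apply: le_truncn; rewrite ler_wpM2r ?ler0n //; lra.
Qed.

Definition CT : finType := ({ffun 'I_Q -> 'I_(2 * N).+1 * 'I_(2 * N).+1} * 'I_(2 * N).+1)%type.

Definition cellc (c : 'cV[C]_Q * R * R) : CT :=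
  ([ffun i => (inord (idx (complex.Re (c.1.1 i 0))), inord (idx (complex.Im (c.1.1 i 0))))],
   inord (idx c.1.2)).

Lemma coord_bound (v : 'cV[C]_Q) i : sqnorm v <= 1 ->
  (-1 <= complex.Re (v i 0) <= 1) /\ (-1 <= complex.Im (v i 0) <= 1).
Proof.
move=> H.
have : (complex.Re (v i 0)) ^+ 2 + (complex.Im (v i 0)) ^+ 2 <= sqnorm v.
  rewrite /sqnorm (bigD1 i) //= lerDl; apply: sumr_ge0 => j _.
  by apply: addr_ge0; apply: sqr_ge0.
have := sqr_ge0 (complex.Re (v i 0)); have := sqr_ge0 (complex.Im (v i 0)).
move=> h1 h2 h3.
split; apply/andP; split; nra.
Qed.

Lemma sq_small (d : R) : d * N%:R < 1 -> - d * N%:R < 1 -> d ^+ 2 * N%:R <= 1.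
Proof.
move=> h1 h2; have h3 := N_ge1.
have : (d * N%:R) ^+ 2 <= 1 by nra.
have : d ^+ 2 * N%:R <= (d * N%:R) ^+ 2.
  by rewrite exprMn ler_wpM2l ?sqr_ge0 // expr2 ler_peMl // ler0n.
lra.
Qed.

Lemma cellc_close x y n n' :
  let c1 := cfgx x n in let c2 := cfgx y n' in
  cellc c1 = cellc c2 ->
  (c1.1.2 - c2.1.2) * N%:R < 1 /\ (c2.1.2 - c1.1.2) * N%:R < 1 /\
  sqnorm (c1.1.1 - c2.1.1) * N%:R <= 2 * (Q%:R : R).
Proof.
move=> c1 c2 E.
have [_ [a1 [_ [_ s1]]]] := cfgx_props x n.
have [_ [a2 [_ [_ s2]]]] := cfgx_props y n'.
have T1 : c1.1.2 <= 1.
  have [T _] := cfgx_props x n; move: T; rewrite /tot => T.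
  have [_ [_ [r1 [q1 _]]]] := cfgx_props x n; rewrite -/c1 in T r1 q1 *; lra.
have T2 : c2.1.2 <= 1.
  have [T _] := cfgx_props y n'; move: T; rewrite /tot => T.
  have [_ [_ [r1 [q1 _]]]] := cfgx_props y n'; rewrite -/c2 in T r1 q1 *; lra.
have Ea : idx c1.1.2 = idx c2.1.2.
  have := congr1 (fun c : CT => val c.2) E; rewrite /= !inordK //; exact: idx_le.
have [ea1 ea2] := idx_close (ltac:(lra) : -1 <= c1.1.2) (ltac:(lra) : -1 <= c2.1.2) Ea.
split => //; split => //.
rewrite /sqnorm mulr_suml.
have -> : 2 * (Q%:R : R) = \sum_(i < Q) 2.
  by rewrite sumr_const card_ord mulr_natr.
apply: ler_sum => i _.
have [/andP [r1 r2] /andP [i1 i2]] := coord_bound i s1.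
have [/andP [r3 r4] /andP [i3 i4]] := coord_bound i s2.
have := congr1 (fun c : CT => c.1 i) E; rewrite /= !ffunE => -[/(congr1 val) eR /(congr1 val) eI].
rewrite /= !inordK ?idx_le // in eR eI.
have [d1 d2] := idx_close r1 r3 eR.
have [d3 d4] := idx_close i1 i3 eI.
rewrite !mxE.
have -> : complex.Re (c1.1.1 i 0 - c2.1.1 i 0) = complex.Re (c1.1.1 i 0) - complex.Re (c2.1.1 i 0).
  by case: (c1.1.1 i 0) => ? ?; case: (c2.1.1 i 0) => ? ?.
have -> : complex.Im (c1.1.1 i 0 - c2.1.1 i 0) = complex.Im (c1.1.1 i 0) - complex.Im (c2.1.1 i 0).
  by case: (c1.1.1 i 0) => ? ?; case: (c2.1.1 i 0) => ? ?.
rewrite mulrDl.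
have := sq_small d1; rewrite opprB => /(_ d2).
have := sq_small d3; rewrite opprB => /(_ d4).
lra.
Qed.

Definition rk (c : 'cV[C]_Q * R * R) := Num.truncn (sqnorm c.1.1 * N%:R).

Lemma rk_le_N x n : (rk (cfgx x n) <= N)%N.
Proof.
have [_ [_ [_ [_ s1]]]] := cfgx_props x n.
rewrite /rk -[X in (_ <= X)%N](@natrK R); apply: le_truncn.
by rewrite -[X in _ <= X]mul1r ler_wpM2r ?ler0n.
Qed.

Lemma ext_props x z n : (size (x ++ z) <= n)%N ->
  let c := cfgx x n in let e := cfgx (x ++ z) n in
  c.1.2 <= e.1.2 /\ c.2 <= e.2 /\ e.1.2 + e.2 + sqnorm e.1.1 = c.1.2 + c.2 + sqnorm c.1.1.
Proof.
move=> H /=; rewrite cfgx_ext //.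
set w := zip _ _.
have [m1 m2] := stepl_mono (cfgx x n) w.
have T := stepl_tot (cfgx x n) w.
by split => //; split.
Qed.

Lemma rk_mono x z n : (size (x ++ z) <= n)%N ->
  (rk (cfgx (x ++ z) n) <= rk (cfgx x n))%N.
Proof.
move=> H; have [m1 [m2 T]] := ext_props H.
rewrite /rk; apply: le_truncn; rewrite ler_wpM2r ?ler0n //; lra.
Qed.

Lemma rk_loss (c1 c2 : 'cV[C]_Q * R * R) : 0 <= sqnorm c1.1.1 -> 0 <= sqnorm c2.1.1 ->
  rk c1 = rk c2 -> (sqnorm c1.1.1 - sqnorm c2.1.1) * N%:R < 1.
Proof.
move=> p1 p2 E.
have hu : 0 <= sqnorm c1.1.1 * N%:R by rewrite mulr_ge0 ?ler0n.
have hv : 0 <= sqnorm c2.1.1 * N%:R by rewrite mulr_ge0 ?ler0n.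
have /andP [a1 a2] := truncn_itv hu; have /andP [b1 b2] := truncn_itv hv.
rewrite -/(rk c1) E in a1 a2. rewrite -/(rk c2) in b1 b2.
rewrite mulrBl; lra.
Qed.

Lemma key x y z n : size x = size y -> (size (x ++ z) <= n)%N ->
  cellc (cfgx (x ++ z) n) = cellc (cfgx (y ++ z) n) ->
  rk (cfgx x n) = rk (cfgx (x ++ z) n) -> rk (cfgx y n) = rk (cfgx (y ++ z) n) ->
  forall z', size (x ++ z') = n -> S (x ++ z') = S (y ++ z').
Proof.
move=> sxy Hx Ec Rx Ry.
have Hy : (size (y ++ z) <= n)%N by rewrite size_cat -sxy -size_cat.
have [c1 [c2 c3]] := cellc_close Ec.
have [x1 [x2 Tx]] := ext_props Hx.
have [y1 [y2 Ty]] := ext_props Hy.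
have [_ [_ [_ [px _]]]] := cfgx_props x n.
have [_ [_ [_ [py _]]]] := cfgx_props y n.
have [_ [_ [_ [pxz _]]]] := cfgx_props (x ++ z) n.
have [_ [_ [_ [pyz _]]]] := cfgx_props (y ++ z) n.
have lx := ltN (rk_loss px pxz Rx).
have ly := ltN (rk_loss py pyz Ry).
have L : psi_loss (cfgx x n) (cfgx y n) <= psi_loss (cfgx (x ++ z) n) (cfgx (y ++ z) n).
  rewrite (cfgx_ext Hx) (cfgx_ext Hy) -sxy; exact: stepl_loss.
rewrite /psi_loss in L.
have e1 := ltN c1. have e2 := ltN c2. have e3 := leN c3.
have A1 := NA. have A2 := NB. have A3 := NC.
have tdef : 4 * tq = gg by rewrite /tq; field.
move: e1 e2 e3 A1 A2 A3 lx ly L.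
set iN := N%:R^-1; set q := (Q%:R : R).
move=> e1 e2 e3 A1 A2 A3 lx ly L.
rewrite -mulrA in A3; set qi := q * iN in e3 A3.
rewrite -mulrA -/qi in e3.
apply: sep => //; last lra.
rewrite ler_norml; apply/andP; split; lra.
Qed.

Local Notation D := (Delta Sigma).
Definition cfgp (p : D) := cfgx (dstr p) (dlen p).
Definition res (p q : D) := forall z, size (dstr p ++ z) = dlen p -> S (dstr p ++ z) = S (dstr q ++ z).
Definition slice (p : D) := (dlen p, size (dstr p)).
Definition keyset (p : D) : {set CT} :=
  [set c | `[< exists p' : D, [/\ slice p' = slice p, res p' p & cellc (cfgp p') = c] >] ].
Definition eqS (p q : D) := keyset p = keyset q.
Definition leS (p q : D) := (rk (cfgp p) <= rk (cfgp q))%N.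
Definition close (p q : D) := cellc (cfgp p) = cellc (cfgp q).

Lemma dsize (p : D) : (size (dstr p) <= dlen p)%N.
Proof. exact: (proj2_sig p). Qed.

Lemma res_refl p : res p p. Proof. by []. Qed.

Lemma res_sym p q : slice p = slice q -> res p q -> res q p.
Proof.
case=> e1 e2 H z Hz; symmetry; apply: H.
by rewrite size_cat e2 -size_cat Hz e1.
Qed.

Lemma res_trans p q r : slice p = slice q -> res p q -> res q r -> res p r.
Proof.
case=> e1 e2 H1 H2 z Hz; rewrite H1 // H2 //.
by rewrite size_cat -e2 -size_cat Hz e1.
Qed.

Lemma close_res p q : slice p = slice q -> close p q -> res p q.
Proof.
case=> e1 e2 Hc z Hz.
have H := @key (dstr p) (dstr q) [::] (dlen p) e2.
rewrite !cats0 in H; apply: H => //; first exact: dsize.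
by move: Hc; rewrite /close /cfgp e1.
Qed.

Lemma cond5 p q : slice p = slice q -> (eqS p q <-> res p q).
Proof.
move=> spq; split.
  move=> E.
  have : cellc (cfgp p) \in keyset p by rewrite inE; apply/asboolP; exists p.
  rewrite E inE => /asboolP [p' [s' r' c']].
  have spp' : slice p = slice p' by rewrite spq s'.
  exact: res_trans spp' (close_res spp' (esym c')) r'.
move=> r; apply/setP => c; rewrite !inE; apply/asboolP/asboolP => -[p' [s' r' c']].
  exists p'; split => //; first by rewrite s'.
  exact: (res_trans s' r' r).
exists p'; split => //; first by rewrite s'.
exact: (res_trans s' r' (res_sym spq r)).
Qed.

Lemma chain_bound (s : seq D) a : desc_chain leS (a :: s) -> (size (a :: s) <= (rk (cfgp a)).+1)%N.
Proof.
elim: s a => [|b t IH] a //= [[lba nab] Hc].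
have lt : (rk (cfgp b) < rk (cfgp a))%N.
  move: lba; rewrite /leS ltn_neqAle => ->; rewrite andbT; apply/eqP => E.
  by apply: nab; split; rewrite /leS E.
by apply: leq_trans (IH b Hc) _.
Qed.

Lemma main :
  exists (c d : nat) (eqS leS close : Delta Sigma -> Delta Sigma -> Prop),
    (0 < c)%N /\ (0 < d)%N /\
    is_equivalence eqS /\ is_preorder leS /\ is_closeness close /\
    finite_quotient eqS /\
    (forall p q : Delta Sigma,
               (dlen p) = (dlen q) -> size (dstr p) = size (dstr q) ->
               close p q -> eqS p q) /\
    (forall (p q : Delta Sigma) (sg : Sigma),
               (dlen p) = (dlen q) -> (dstr p) = rcons (dstr q) sg ->
               leS p q) /\
    (forall (p q pz qz : Delta Sigma) (z : seq Sigma),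
               (dlen p) = (dlen q) -> size (dstr p) = size (dstr q) ->
               (dlen pz) = (dlen p) -> (dlen qz) = (dlen q) ->
               (dstr pz) = (dstr p) ++ z -> (dstr qz) = (dstr q) ++ z ->
               ord_eq leS p pz -> ord_eq leS q qz -> close pz qz ->
               eqS p q) /\
    (forall p q : Delta Sigma,
               (dlen p) = (dlen q) -> size (dstr p) = size (dstr q) ->
               (eqS p q <->
                forall z : seq Sigma, size ((dstr p) ++ z) = (dlen p) ->
                  S ((dstr p) ++ z) = S ((dstr q) ++ z))) /\
    (forall s : seq (Delta Sigma), desc_chain leS s -> (size s <= c)%N) /\
    (forall s : seq (Delta Sigma), discrepancy_list close s ->
               (size s <= d)%N).
Proof.
exists N.+1, #|CT|.+1, eqS, leS, close.
split => //; split => //.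
split; first by split; [move=> a | move=> a b; rewrite /eqS => -> | move=> a b c; rewrite /eqS => -> ->].
split; first by split; [move=> a; exact: leqnn | move=> a b c; exact: leq_trans].
split; first by split; [move=> a | move=> a b; rewrite /close => ->].
split.
  pose p0 : D := exist _ ([::], 0%N) isT.
  pose f (i : nat) : D :=
    match pselect (exists p : D, keyset p = nth set0 (enum {set CT}) i) with
    | left H => proj1_sig (cid H) | right _ => p0 end.
  exists #|{set CT}|, f => a.
  exists (index (keyset a) (enum {set CT})).
    by rewrite cardE index_mem mem_enum.
  rewrite /f; case: pselect => [H|[]]; last first.
    by exists a; rewrite nth_index // mem_enum.
  case: (cid H) => p /= Hp.
  by rewrite /eqS Hp nth_index // mem_enum.
split.
  move=> p q e1 e2 Hc; apply/cond5; first by rewrite /slice e1 e2.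
  by apply: close_res => //; rewrite /slice e1 e2.
split.
  move=> p q sg e1 e2; rewrite /leS /cfgp e2 e1 -cats1; apply: rk_mono.
  by rewrite cats1 -e2 -e1 dsize.
split.
  move=> p q pz qz z e1 e2 e3 e4 e5 e6 [o1 o2] [o3 o4] Hc.
  apply/cond5; first by rewrite /slice e1 e2.
  have Hx : (size (dstr p ++ z) <= dlen p)%N by rewrite -e5 -e3 dsize.
  have H := @key (dstr p) (dstr q) z (dlen p) e2 Hx.
  apply: H.
  - by move: Hc; rewrite /close /cfgp e5 e6 e3 e4 e1.
  - by apply/anti_leq/andP; split; move: o1 o2; rewrite /leS /cfgp e5 e3.
  - by rewrite e1; apply/anti_leq/andP; split; move: o3 o4; rewrite /leS /cfgp e6 e4.
split.
  by move=> p q e1 e2; apply: cond5; rewrite /slice e1 e2.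
split.
  case=> [|a s] // Hc; apply: leq_trans (chain_bound Hc) _.
  by rewrite ltnS rk_le_N.
move=> s [us Hd].
have us' : uniq (map (fun p => cellc (cfgp p)) s).
  rewrite map_inj_in_uniq // => a b ia ib E.
  apply/eqP; apply/negPn/negP => nab; exact: (Hd a b ia ib nab E).
rewrite ltnW // ltnS -(size_map (fun p => cellc (cfgp p))).
by rewrite -(card_uniqP us') max_card.
Qed.

End Main.

Unset Implicit Arguments.
Theorem theorem3p4 (R : realType) (Sigma : finType) (S : seq Sigma -> bool) :
  in_1QFA_n R S ->
  exists (c d : nat) (eqS leS close : Delta Sigma -> Delta Sigma -> Prop),
    (0 < c)%N /\ (0 < d)%N /\
    is_equivalence eqS /\ is_preorder leS /\ is_closeness close /\
    (* 1 *) finite_quotient eqS /\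
    (* 2 *) (forall p q : Delta Sigma,
               (dlen p) = (dlen q) -> size (dstr p) = size (dstr q) ->
               close p q -> eqS p q) /\
    (* 3 *) (forall (p q : Delta Sigma) (sg : Sigma),
               (dlen p) = (dlen q) -> (dstr p) = rcons (dstr q) sg ->
               leS p q) /\
    (* 4 *) (forall (p q pz qz : Delta Sigma) (z : seq Sigma),
               (dlen p) = (dlen q) -> size (dstr p) = size (dstr q) ->
               (dlen pz) = (dlen p) -> (dlen qz) = (dlen q) ->
               (dstr pz) = (dstr p) ++ z -> (dstr qz) = (dstr q) ++ z ->
               ord_eq leS p pz -> ord_eq leS q qz -> close pz qz ->
               eqS p q) /\
    (* 5 *) (forall p q : Delta Sigma,
               (dlen p) = (dlen q) -> size (dstr p) = size (dstr q) ->
               (eqS p q <->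
                forall z : seq Sigma, size ((dstr p) ++ z) = (dlen p) ->
                  S ((dstr p) ++ z) = S ((dstr q) ++ z))) /\
    (* 6 *) (forall s : seq (Delta Sigma), desc_chain leS s -> (size s <= c)%N) /\
    (* 7 *) (forall s : seq (Delta Sigma), discrepancy_list close s ->
               (size s <= d)%N).
Proof.
case=> Gamma [h [M [eps [e0 e1 hsz hS]]]].
by apply: (@main _ _ _ _ h M eps).
Qed.
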